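(* Let $P$ be a graded poset and let $\sim$ be an equivalence relation on $P$ such that $x\sim y$ implies $\rho(x)=\rho(y)$. On the set $P/\sim$ of equivalence classes define $X\le Y$ iff there exist $x\in X$, $y\in Y$ and $z_1,\dots,z_k\in P$ such that $x\le z_1\sim z_2\le z_3\sim\cdots\le z_{k-1}\sim z_k\le y$. Then: (1) $P/\sim$ with $\le$ is a poset; (2) for $X,Y\in P/\sim$, $X\lessdot Y$ if and only if $x\lessdot y$ for some $x\in X$ and $y\in Y$; (3) $P/\sim$ is graded, and for $X\in P/\sim$ we have $\rho(X)=\rho(x)$ for all $x\in X$.
   Context: $P$ is a finite graded poset with rank function $\rho$. *)

(* Defs.v *)
From HB Require Import structures.
From mathcomp Require Import all_boot all_order.
Set Implicit Arguments. Unset Strict Implicit. Unset Printing Implicit Defensive.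
Import Order.TTheory.
Local Open Scope order_scope.

Definition is_poset_on (A : Type) (D : A -> Prop) (le : A -> A -> Prop) :=
  [/\ (forall x, D x -> le x x),
      (forall x y, D x -> D y -> le x y -> le y x -> x = y) &
      (forall x y z, D x -> D y -> D z -> le x y -> le y z -> le x z)].

Definition covers (A : Type) (D : A -> Prop) (le : A -> A -> Prop) (x y : A) :=
  [/\ le x y, x <> y &
      ~ (exists z, [/\ D z, le x z, z <> x, le z y & z <> y])].

Definition graded_by (A : Type) (D : A -> Prop) (le : A -> A -> Prop)
  (rk : A -> nat) :=
  (forall x, D x -> (forall y, D y -> le y x -> y = x) -> rk x = 0%N) /\
  (forall x y, D x -> D y -> covers D le x y -> rk y = (rk x).+1).

(* Zigzag x <= a1 ~ b1 <= a2 ~ b2 <= ... <= ak ~ bk <= y, encoded by the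
   list of pairs [(a1,b1); ...; (ak,bk)] (possibly empty: then x <= y). *)
Fixpoint zigzag (d : Order.disp_t) (T : porderType d) (r : rel T)
  (x : T) (s : seq (T * T)) (y : T) : bool :=
  match s with
  | [::] => x <= y
  | (a, b) :: s' => [&& x <= a, r a b & zigzag r b s' y]
  end.

Definition qclasses (d : Order.disp_t) (T : finPOrderType d) (r : rel T)
  : {set {set T}} := [set [set y | r x y] | x : T].

Definition qle (d : Order.disp_t) (T : finPOrderType d) (r : rel T)
  (X Y : {set T}) : Prop :=
  exists x y s, [/\ x \in X, y \in Y & zigzag r x s y].

(* Main.v *)
Require Import Defs.
From HB Require Import structures.
From mathcomp Require Import all_boot all_order.
From mathcomp Require Import zify.
Set Implicit Arguments. Unset Strict Implicit.
Import Order.TTheory.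
Local Open Scope order_scope.

Lemma card_l (d : Order.disp_t) (P : finPOrderType d) (x z y : P) :
  x < z -> z < y ->
  ltn #|[set w | (x < w) && (w <= z)]| #|[set w | (x < w) && (w <= y)]|.
Proof.
move=> xz zy; apply: proper_card; apply/properP; split.
  apply/subsetP => w; rewrite !inE => /andP[-> wz]; exact: le_trans wz (ltW zy).
exists y; rewrite !inE ?(lt_trans xz zy) ?lexx ?(lt_geF zy) //.
Qed.

Lemma card_r (d : Order.disp_t) (P : finPOrderType d) (x z y : P) :
  x < z -> z < y ->
  ltn #|[set w | (z < w) && (w <= y)]| #|[set w | (x < w) && (w <= y)]|.
Proof.
move=> xz zy; apply: proper_card; apply/properP; split.
  apply/subsetP => w; rewrite !inE => /andP[zw ->]; rewrite (lt_trans xz zw) //.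
exists z; rewrite !inE ?xz ?(ltW zy) ?ltxx //.
Qed.

Lemma exists_cover (d : Order.disp_t) (P : finPOrderType d) (x y : P) :
  x < y -> exists c, covers (fun _ => True) (fun a b : P => a <= b) x c /\ c <= y.
Proof.
suff H : forall n (x y : P), leq #|[set w | (x < w) && (w <= y)]| n -> x < y ->
   exists c, covers (fun _ => True) (fun a b : P => a <= b) x c /\ c <= y.
  by move=> xy; apply: (H _ x y (leqnn _) xy).
elim=> [|n IH] {}x {}y Hn xy.
  rewrite leqn0 cards_eq0 in Hn; move/eqP: Hn => Hn.
  have : y \in [set w | (x < w) && (w <= y)] by rewrite inE xy lexx.
  by rewrite Hn inE.
case: (boolP [exists z, (x < z) && (z < y)]).
  case/existsP => z /andP[xz zy].
  have [c [cc cz]] := IH x z (leq_trans (card_l xz zy) Hn) xz.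
  by exists c; split=> //; exact: le_trans cz (ltW zy).
rewrite negb_exists => /forallP Hn2.
exists y; split=> //; split; [exact: ltW | by move=> e; rewrite e ltxx in xy|].
case=> z [_ xz zx zy zy'].
have := Hn2 z; rewrite !lt_def xz zy.
have -> : (z != x) by apply/eqP.
by have -> : (y != z) by apply/eqP => e; apply: zy'.
Qed.

Lemma rank_lt (d : Order.disp_t) (P : finPOrderType d) (rho : P -> nat)
  (Hgraded : graded_by (fun _ => True) (fun x y : P => x <= y) rho) (x y : P) :
  x < y -> (rho x < rho y)%N.
Proof.
suff H : forall n (x y : P), leq #|[set w | (x < w) && (w <= y)]| n -> x < y ->
   (rho x < rho y)%N.
  by move=> xy; apply: (H _ x y (leqnn _) xy).
elim=> [|n IH] {}x {}y Hn xy.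
  rewrite leqn0 cards_eq0 in Hn; move/eqP: Hn => Hn.
  have : y \in [set w | (x < w) && (w <= y)] by rewrite inE xy lexx.
  by rewrite Hn inE.
case: (boolP [exists z, (x < z) && (z < y)]).
  case/existsP => z /andP[xz zy].
  apply: (@ltn_trans (rho z)).
    exact: IH (leq_trans (card_l xz zy) Hn) xz.
  exact: IH (leq_trans (card_r xz zy) Hn) zy.
rewrite negb_exists => /forallP Hn2.
suff hc : covers (fun _ => True) (fun a b : P => a <= b) x y.
  by rewrite (Hgraded.2 x y I I hc); exact: ltnSn.
split; [exact: ltW | by move=> e; rewrite e ltxx in xy|].
case=> z [_ xz zx zy zy'].
have := Hn2 z; rewrite !lt_def xz zy.
have -> : (z != x) by apply/eqP.
by have -> : (y != z) by apply/eqP => e; apply: zy'.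
Qed.

Lemma rank_le (d : Order.disp_t) (P : finPOrderType d) (rho : P -> nat)
  (Hgraded : graded_by (fun _ => True) (fun x y : P => x <= y) rho) (x y : P) :
  x <= y -> (rho x <= rho y)%N.
Proof.
rewrite le_eqVlt => /orP[/eqP -> //|xy]; exact: ltnW (rank_lt Hgraded xy).
Qed.

Lemma rank_eq (d : Order.disp_t) (P : finPOrderType d) (rho : P -> nat)
  (Hgraded : graded_by (fun _ => True) (fun x y : P => x <= y) rho) (x y : P) :
  x <= y -> rho x = rho y -> x = y.
Proof.
rewrite le_eqVlt => /orP[/eqP -> //|xy] e.
by have := rank_lt Hgraded xy; rewrite e ltnn.
Qed.

Lemma zz_rank (d : Order.disp_t) (P : finPOrderType d) (rho : P -> nat)
  (Hgraded : graded_by (fun _ => True) (fun x y : P => x <= y) rho) (r : rel P)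
  (Hrank : forall x y, r x y -> rho x = rho y) s (x y : P) :
  zigzag r x s y -> (rho x <= rho y)%N.
Proof.
elim: s x => [|[a b] s IH] x /=; first exact: rank_le.
case/and3P => xa ab zz.
apply: leq_trans (rank_le Hgraded xa) _; rewrite (Hrank _ _ ab); exact: IH.
Qed.

Lemma zz_eq (d : Order.disp_t) (P : finPOrderType d) (rho : P -> nat)
  (Hgraded : graded_by (fun _ => True) (fun x y : P => x <= y) rho) (r : rel P)
  (Hrefl : reflexive r) (Htrans : transitive r)
  (Hrank : forall x y, r x y -> rho x = rho y) s (x y : P) :
  zigzag r x s y -> rho x = rho y -> r x y.
Proof.
elim: s x => [|[a b] s IH] x /=.
  by move=> xy e; rewrite (rank_eq Hgraded xy e).
case/and3P => xa ab zz e.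
have h1 := rank_le Hgraded xa; have h2 := zz_rank Hgraded Hrank zz.
have eab := Hrank _ _ ab.
have exa : rho x = rho a by apply/eqP; rewrite eqn_leq h1 e eab h2.
rewrite (rank_eq Hgraded xa exa); apply: Htrans ab _; apply: IH zz _.
by rewrite -eab -exa.
Qed.

Lemma zz_cat (d : Order.disp_t) (P : finPOrderType d) (r : rel P) s (x y : P) :
  zigzag r x s y -> forall a b t z, y <= a -> r a b -> zigzag r b t z ->
  zigzag r x (s ++ (a, b) :: t) z.
Proof.
elim: s x => [|[a' b'] s IH] x /=.
  move=> xy a b t z ya ab zz; rewrite (le_trans xy ya) ab zz //.
case/and3P => xa ab zz a0 b0 t z ya ab0 zz0.
rewrite xa ab /=; exact: IH.
Qed.

Lemma zz_cover (d : Order.disp_t) (P : finPOrderType d) (rho : P -> nat)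
  (Hgraded : graded_by (fun _ => True) (fun x y : P => x <= y) rho) (r : rel P)
  (Hrefl : reflexive r) (Htrans : transitive r)
  (Hrank : forall x y, r x y -> rho x = rho y) s (x y : P) :
  zigzag r x s y -> (rho x < rho y)%N ->
  exists u c t, [/\ r x u, covers (fun _ => True) (fun a b : P => a <= b) u c
                   & zigzag r c t y].
Proof.
elim: s x => [|[a b] s IH] x /=.
  move=> xy lt.
  have xy' : x < y by rewrite lt_def xy andbT; apply/eqP => e; rewrite e ltnn in lt.
  have [c [cc cy]] := exists_cover xy'.
  by exists x, c, [::]; split.
case/and3P => xa ab zz lt.
case: (ltnP (rho x) (rho a)) => h.
  have xa' : x < a by rewrite lt_def xa andbT; apply/eqP => e; rewrite e ltnn in h.
  have [c [cc ca]] := exists_cover xa'.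
  by exists x, c, ((a, b) :: s); split => //=; rewrite ca ab zz.
have exa : rho x = rho a by apply/eqP; rewrite eqn_leq h (rank_le Hgraded xa).
have ex := rank_eq Hgraded xa exa; subst a.
have lt' : (rho b < rho y)%N by rewrite -(Hrank _ _ ab).
have [u [c [t [bu cc zz']]]] := IH b zz lt'.
by exists u, c, t; split => //; exact: Htrans ab bu.
Qed.

Theorem proposition3p15 (d : Order.disp_t) (P : finPOrderType d)
  (rho : P -> nat)
  (Hgraded : graded_by (fun _ => True) (fun x y : P => x <= y) rho)
  (r : rel P)
  (Hrefl : reflexive r) (Hsym : symmetric r) (Htrans : transitive r)
  (Hrank : forall x y, r x y -> rho x = rho y) :
  let Q := qclasses r in
  let inQ := fun X : {set P} => X \in Q in
  (* (1) P/~ is a poset *)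
  is_poset_on inQ (qle r) /\
  (* (2) covers in P/~ *)
  (forall X Y, X \in Q -> Y \in Q ->
     (covers inQ (qle r) X Y <->
      exists x y, [/\ x \in X, y \in Y &
                      covers (fun _ => True) (fun a b : P => a <= b) x y])) /\
  (* (3) P/~ is graded, with rank of a class = rank of any element *)
  (exists rhoQ : {set P} -> nat,
     graded_by inQ (qle r) rhoQ /\
     forall X x, X \in Q -> x \in X -> rhoQ X = rho x).
Proof.
move=> Q inQ.
have memQ : forall X x, X \in Q -> x \in X -> X = [set y | r x y].
  move=> X x /imsetP[x0 _ ->]; rewrite inE => h; apply/setP => z; rewrite !inE.
  apply/idP/idP => hz; first by apply: Htrans hz; rewrite Hsym.
  exact: Htrans hz.
have clsQ : forall x, [set y | r x y] \in Q by move=> x; apply/imsetP; exists x.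
have clsx : forall x, x \in [set y | r x y] by move=> x; rewrite inE.
have nonempty : forall X, X \in Q -> exists x, x \in X.
  by move=> X /imsetP[x0 _ ->]; exists x0.
have rkQ : forall X x x', X \in Q -> x \in X -> x' \in X -> rho x = rho x'.
  move=> X x x' hX hx; rewrite (memQ X x hX hx) inE; exact: Hrank.
have qle_rank : forall X Y x y, X \in Q -> Y \in Q -> qle r X Y -> x \in X -> y \in Y ->
    (rho x <= rho y)%N.
  move=> X Y x y hX hY [x' [y' [s [hx' hy' zz]]]] hx hy.
  rewrite (rkQ X x x' hX hx hx') (rkQ Y y y' hY hy hy'); exact: zz_rank zz.
have qle_eq : forall X Y x y, X \in Q -> Y \in Q -> qle r X Y -> x \in X -> y \in Y ->
    rho x = rho y -> X = Y.
  move=> X Y x y hX hY [x' [y' [s [hx' hy' zz]]]] hx hy e.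
  have e' : rho x' = rho y' by rewrite -(rkQ X x x' hX hx hx') -(rkQ Y y y' hY hy hy').
  have rxy := zz_eq Hgraded Hrefl Htrans Hrank zz e'.
  have hxY : x' \in Y by rewrite (memQ Y y' hY hy') inE Hsym.
  by rewrite (memQ X x' hX hx') (memQ Y x' hY hxY).
have part2 : forall X Y, X \in Q -> Y \in Q ->
     (covers inQ (qle r) X Y <->
      exists x y, [/\ x \in X, y \in Y &
                      covers (fun _ => True) (fun a b : P => a <= b) x y]).
  move=> X Y hX hY; split.
    case=> qXY XY nob.
    have [x [y [s [hx hy zz]]]] := qXY.
    have lt : (rho x < rho y)%N.
      rewrite ltn_neqAle (zz_rank Hgraded Hrank zz) andbT.
      by apply/eqP => e; apply: XY; apply: qle_eq qXY hx hy e.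
    have [u [c [t [xu cc zz']]]] := zz_cover Hgraded Hrefl Htrans Hrank zz lt.
    have hu : u \in X by rewrite (memQ X x hX hx) inE.
    case: (eqVneq [set y | r c y] Y) => [eC|nC].
      by exists u, c; split => //; rewrite -eC.
    exfalso; apply: nob; exists [set y | r c y]; split.
    - exact: clsQ.
    - by exists u, c, [::]; split => //=; case: cc.
    - move=> eC; have hc : c \in X by rewrite -eC.
      have := rkQ X u c hX hu hc; rewrite (Hgraded.2 u c I I cc) => e.
      exact: n_Sn (rho u) e.
    - by exists c, y, t; split.
    - by apply/eqP.
  case=> x [y [hx hy cc]].
  have ey := Hgraded.2 x y I I cc.
  have qXY : qle r X Y by exists x, y, [::]; split => //=; case: cc.
  split => //.
    move=> e; rewrite e in hx; have := rkQ Y x y hY hx hy; rewrite ey => e'.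
    exact: n_Sn (rho x) e'.
  case=> Z [hZ qXZ ZX qZY ZY].
  have [z hz] := nonempty Z hZ.
  have h1 := qle_rank X Z x z hX hZ qXZ hx hz.
  have h2 := qle_rank Z Y z y hZ hY qZY hz hy.
  rewrite ey in h2.
  have [e|e] : rho z = rho x \/ rho z = (rho x).+1 by lia.
    by apply: ZX; symmetry; apply: qle_eq qXZ hx hz _.
  by apply: ZY; apply: (qle_eq Z Y z y hZ hY qZY hz hy); rewrite e ey.
split.
  split.
  - move=> X hX; have [x hx] := nonempty X hX.
    by exists x, x, [::]; split => //=.
  - move=> X Y hX hY qXY qYX.
    have [x hx] := nonempty X hX; have [y hy] := nonempty Y hY.
    apply: (qle_eq X Y x y hX hY qXY hx hy); apply/eqP; rewrite eqn_leq.
    by rewrite (qle_rank X Y x y) // (qle_rank Y X y x).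
  - move=> X Y Z hX hY hZ [x [y [s [hx hy zz]]]] [y' [z [t [hy' hz zz']]]].
    have ryy : r y y' by move: hy'; rewrite (memQ Y y hY hy) inE.
    exists x, z, (s ++ (y, y') :: t); split => //.
    exact: zz_cat zz _ _ _ _ (lexx y) ryy zz'.
split; first exact: part2.
pose rhoQ (X : {set P}) := if [pick x in X] is Some x then rho x else 0%N.
have rhoQE : forall X x, X \in Q -> x \in X -> rhoQ X = rho x.
  move=> X x hX hx; rewrite /rhoQ; case: pickP => [y hy|h].
    exact: rkQ hX hy hx.
  by have := h x; rewrite hx.
exists rhoQ; split => //; split.
  move=> X hX hmin; have [x hx] := nonempty X hX.
  rewrite (rhoQE X x hX hx); apply: Hgraded.1 => // y _ /= yx.
  have e : [set z | r y z] = X.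
    apply: hmin; first exact: clsQ.
    by exists y, x, [::]; split.
  have hy : y \in X by rewrite -e.
  have := rkQ X y x hX hy hx.
  move=> e2; exact: (rank_eq Hgraded yx e2).
move=> X Y hX hY cXY.
have [x [y [hx hy cc]]] := (part2 X Y hX hY).1 cXY.
by rewrite (rhoQE X x hX hx) (rhoQE Y y hY hy); exact: Hgraded.2.
Qed.
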